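(* Let $G$ be a finite group and $N$ a normal subgroup with $1<N<G$ such that every $x\in G\setminus N$ is conjugate in $G$ to every element of $xN$ (i.e. $(G,N)$ is a Camina pair). Let $A=\{\chi_1,\dots,\chi_n\}$ be a set of non-trivial irreducible characters of $G$ such that (i) each $\chi_i$ vanishes on $G\setminus N$, and (ii) there exist positive integers $\alpha_1,\dots,\alpha_n$ such that $\sum_{i=1}^n\alpha_i\chi_i$ is constant on $N\setminus\{1\}$. Then $A=\mathrm{Irr}(G\mid N)$.
   Context: $\mathrm{Irr}(G)$ denotes the set of complex irreducible characters of $G$, and $\mathrm{Irr}(G\mid N)=\{\chi\in\mathrm{Irr}(G)\mid N\not\le\ker\chi\}$. *)

(* Defs.v *)
From mathcomp Require Import all_boot all_order all_algebra all_fingroup all_solvable all_field all_character.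
Set Implicit Arguments. Unset Strict Implicit. Unset Printing Implicit Defensive.
Import GRing.Theory Num.Theory.
Local Open Scope ring_scope.

Definition camina_pair (gT : finGroupType) (G N : {set gT}) : Prop :=
  forall x, x \in G :\: N -> forall n, n \in N -> ((x * n) \in x ^: G)%g.

(* Irr(G | N) as a set of indices: irreducibles whose kernel does not contain N. *)
Definition Irr_rel (gT : finGroupType) (G N : {group gT}) : {set Iirr G} :=
  [set i : Iirr G | ~~ (N \subset cfker ('chi[G]_i)%CF)].

(* Main.v *)
Require Import Defs.
From mathcomp Require Import all_boot all_order all_algebra all_fingroup all_solvable all_field all_character.
Import GRing.Theory Num.Theory.
Local Open Scope ring_scope.

Lemma dot_indic_rel (gT : finGroupType) (G N : {group gT}) (j : Iirr G) :
  (N <| G)%g -> ~~ (N \subset cfker 'chi[G]_j) -> '['chi[G]_j, '1_N]_G = 0.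
Proof.
move=> nsNG hj; have [sNG _] := andP nsNG.
have eI : 'Ind[G, N] 1 = #|G : N|%g%:R *: '1_N by rewrite cfInd_cfun1.
have hI : '['chi_j, 'Ind[G, N] 1] = 0.
  apply/eqP; apply: contraR hj => nz.
  have Cj : j \in irr_constt ('Ind[G, N] 1).
    by rewrite irr_consttE cfdotC conjC_eq0.
  have := cfker_constt (cfInd_char G (cfun1_char N)) Cj.
  rewrite cfker_Ind ?cfun1_char ?oner_neq0 // cfker_cfun1.
  apply: subset_trans; apply: gcore_max => //; by case/andP: nsNG.
move: hI; rewrite eI cfdotZr => /eqP; rewrite mulf_eq0 => /orP[|/eqP //].
by rewrite conjC_eq0 pnatr_eq0 => /eqP h; move: (indexg_gt0 G N); rewrite h.
Qed.

Lemma dot_reg (gT : finGroupType) (G : {group gT}) (j : Iirr G) :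
  '[cfReg G, 'chi[G]_j]_G = 'chi_j 1%g.
Proof.
rewrite cfReg_sum cfdot_suml (bigD1 j) //= cfdotZl cfdot_irr eqxx mulr1.
rewrite big1 ?addr0 // => i /negPf ij; by rewrite cfdotZl cfdot_irr ij mulr0.
Qed.

Theorem mainTheorem4 (gT : finGroupType) (G N : {group gT}) (A : {set Iirr G}) :
  (N <| G)%g -> (N :!=: 1)%g -> N \proper G ->
  camina_pair G N ->
  A != set0 ->
  (forall i, i \in A -> 'chi[G]_i != 1) ->
  (forall i, i \in A -> forall x, x \in G :\: N -> 'chi[G]_i x = 0) ->
  (exists alpha : Iirr G -> nat,
     (forall i, i \in A -> (0 < alpha i)%N) /\
     exists c : algC, forall x, x \in (N^#)%g ->
       (\sum_(i in A) (alpha i)%:R * 'chi[G]_i x) = c) ->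
  A = Irr_rel G N.
Proof.
move=> nsNG _ _ _ A0 n1 van [alpha [apos [c hc]]].
have [sNG _] := andP nsNG.
have KA : forall j, j \in A -> ~~ (N \subset cfker 'chi[G]_j).
  move=> j jA; apply/negP => sub.
  have eq : 'chi_j = 'chi_j 1%g *: '1_N.
    apply/cfun_inP => x Gx; rewrite cfunE cfuniE //.
    case: (boolP (x \in N)) => xN.
      by rewrite mulr1 cfker1 // (subsetP sub).
    by rewrite mulr0 (van j jA) // inE xN Gx.
  have h1 : '['chi_j, 1]_G != 0.
    rewrite eq cfdotZl mulf_neq0 ?irr1_neq0 //.
    have : '['Ind[G, N] 1, 1]_G = 1.
      by rewrite -cfdot_Res_r cfRes_cfun1 ?cfnorm1.
    rewrite cfInd_cfun1 // cfdotZl => h; apply/eqP => h0.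
    by move: h; rewrite h0 mulr0 => /eqP; rewrite eq_sym oner_eq0.
  move: h1; rewrite -irr0 cfdot_irr pnatr_eq0 eqb0 negbK => /eqP ej.
  by move: (n1 j jA); rewrite ej irr0 eqxx.
set psi : 'CF(G) := \sum_(i in A) (alpha i)%:R *: 'chi_i.
set d := (psi 1%g - c) / #|G|%:R.
have epsi : psi = c *: '1_N + d *: cfReg G.
  apply/cfun_inP => x Gx; rewrite cfunE [((c *: _ : 'CF(G)) x)]cfunE [((d *: _ : 'CF(G)) x)]cfunE cfRegE cfuniE //.
  have ps : psi x = \sum_(i in A) (alpha i)%:R * 'chi[G]_i x.
    by rewrite /psi sum_cfunE; apply: eq_bigr => i _; rewrite cfunE.
  case: (eqVneq x 1%g) => [->|x1].
    by rewrite group1 mulr1 mulr1n /d divfK ?neq0CG // addrC subrK.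
  rewrite mulr0n mulr0 addr0.
  case: (boolP (x \in N)) => xN.
    by rewrite mulr1 ps hc // !inE x1.
  rewrite mulr0 ps big1 // => i iA; by rewrite van ?mulr0 // inE xN Gx.
have dotpsi : forall j, ~~ (N \subset cfker 'chi[G]_j) ->
    '[psi, 'chi_j] = d * 'chi_j 1%g.
  move=> j hj; rewrite epsi cfdotDl (cfdotZl _ d) dot_reg cfdotZl cfdotC.
  by rewrite dot_indic_rel // conjC0 mulr0 add0r.
have dotpsi2 : forall j, '[psi, 'chi_j] = (j \in A)%:R * (alpha j)%:R.
  move=> j; rewrite /psi cfdot_suml.
  case: (boolP (j \in A)) => jA.
    rewrite (bigD1 j) //= cfdotZl cfdot_irr eqxx mulr1 mul1r big1 ?addr0 //.
    move=> i /andP[_ /negPf ij]; by rewrite cfdotZl cfdot_irr ij mulr0.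
  rewrite mul0r big1 // => i iA; rewrite cfdotZl cfdot_irr.
  by case: eqP iA => [->|]; rewrite ?(negPf jA) ?mulr0.
have [k kA] := set0Pn _ A0.
have dnz : d != 0.
  apply/eqP => d0; have := dotpsi k (KA k kA).
  rewrite d0 mul0r dotpsi2 kA mul1r => /eqP; rewrite pnatr_eq0 => /eqP a0.
  by move: (apos k kA); rewrite a0.
apply/setP => j; rewrite /Irr_rel inE.
apply/idP/idP; first exact: KA.
move=> hj; apply/negPn/negP => jA.
have := dotpsi j hj; rewrite dotpsi2 (negPf jA) mul0r => /eqP.
by rewrite eq_sym mulf_eq0 (negPf dnz) (negPf (irr1_neq0 j)).
Qed.
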